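(* Every connected $3$-regular graph of order at least $8$ has an independent minimum vertex cut.
   Context: All graphs are finite and simple. A vertex cut of a connected graph $G$ is a set $S\subset V(G)$ such that $G-S$ is disconnected. If $G$ has connectivity $k$, a vertex cut $S$ is called minimum if $|S|=k$. A vertex cut $S$ is called an independent vertex cut if $S$ is an independent set of $G$. *)

(* Defs.v *)
From mathcomp Require Import all_boot.
Set Implicit Arguments. Unset Strict Implicit. Unset Printing Implicit Defensive.

Definition simple_graph (T : finType) (e : rel T) : Prop :=
  symmetric e /\ irreflexive e.

Definition connected_graph (T : finType) (e : rel T) : Prop :=
  forall x y : T, connect e x y.

Definition regular (T : finType) (e : rel T) (d : nat) : Prop :=
  forall x : T, #|[set y | e x y]| = d.

Definition del_rel (T : finType) (e : rel T) (S : {set T}) : rel T :=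
  [rel x y | [&& e x y, x \notin S & y \notin S]].

Definition vertex_cut (T : finType) (e : rel T) (S : {set T}) : Prop :=
  exists x y : T, [/\ x \notin S, y \notin S & ~~ connect (del_rel e S) x y].

Definition min_vertex_cut (T : finType) (e : rel T) (S : {set T}) : Prop :=
  vertex_cut e S /\ forall S' : {set T}, vertex_cut e S' -> #|S| <= #|S'|.

Definition independent (T : finType) (e : rel T) (S : {set T}) : Prop :=
  forall x y, x \in S -> y \in S -> ~~ e x y.

(* Main.v *)
Require Import Defs.
From mathcomp Require Import all_boot.
From mathcomp Require Import zify.
From Stdlib Require Import Classical.
Set Implicit Arguments. Unset Strict Implicit.

Lemma nb3 (T : finType) (e : rel T) : regular e 3 -> forall x a b c,
  e x a -> e x b -> e x c -> a != b -> a != c -> b != c ->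
  forall w, e x w -> w = a \/ w = b \/ w = c.
Proof.
move=> Hr x a b c xa xb xc ab ac bc w xw.
have sub: [set a; b; c] \subset [set y | e x y].
  by apply/subsetP=> z; rewrite !inE => /orP [/orP [] | ] /eqP ->.
have cd: #|[set y | e x y]| <= #|[set a; b; c]|.
  by rewrite Hr setUC cardsU1 cards2 !inE ab (eq_sym c a) (eq_sym c b) (negbTE ac) (negbTE bc).
have /eqP E: [set a; b; c] == [set y | e x y] by rewrite eqEcard sub cd.
have: w \in [set y | e x y] by rewrite inE.
by rewrite -E !inE => /orP [/orP [] | ] /eqP ->; auto.
Qed.

Lemma nb_third (T : finType) (e : rel T) : regular e 3 -> forall x a b,
  exists c, [&& e x c, c != a & c != b].
Proof.
move=> Hr x a b.
have: 0 < #|[set y | e x y] :\: [set a; b]|.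
  rewrite cardsD Hr.
  have: #|[set y | e x y] :&: [set a; b]| <= 2.
    apply: leq_trans (subset_leq_card (subsetIr _ _)) _.
    by rewrite cards2; case: (a != b).
  lia.
case/card_gt0P => c; rewrite !inE => /andP [].
by rewrite negb_or => /andP [ca cb] xc; exists c; rewrite xc ca cb.
Qed.

Lemma cut_of (T : finType) (e : rel T) : symmetric e ->
  forall (S C : {set T}) x y, x \in C -> x \notin S -> y \notin C -> y \notin S ->
  (forall z w, z \in C -> z \notin S -> e z w -> (w \in C) || (w \in S)) ->
  vertex_cut e S.
Proof.
move=> Hs S C x y xC xS yC yS cl. exists x, y; split=> //.
apply/negP=> con.
have cld: closed (del_rel e S) (C :\: S).
  move=> z w /= /and3P [zw zS wS]; rewrite !inE zS wS /=.
  apply/idP/idP => H.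
    by move: (cl z w H zS zw); rewrite (negbTE wS) orbF.
  have wz : e w z by rewrite Hs.
  by move: (cl w z H wS wz); rewrite (negbTE zS) orbF.
move: (closed_connect cld con); by rewrite !inE xC xS (negbTE yC) andbF.
Qed.

Lemma ex_out (T : finType) (s : seq T) : size s < #|T| -> exists y, y \notin s.
Proof.
move=> Hs; case: (pickP (predC (mem s))) => [y Hy | H]; first by exists y.
exfalso.
have: #|T| <= #|s|.
  apply: subset_leq_card; apply/subsetP=> z _.
  by move: (H z) => /= /negbFE.
by move: (card_size s); lia.
Qed.

Lemma ex_min (T : finType) (P : {set T} -> Prop) : (exists S, P S) ->
  exists S, P S /\ forall S', P S' -> #|S| <= #|S'|.
Proof.
move=> [S PS].
suff: forall n S, P S -> #|S| <= n -> exists S, P S /\ forall S', P S' -> #|S| <= #|S'|.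
  by move/(_ #|S| S PS (leqnn _)).
elim=> [|n IH] S1 P1 H1.
  by exists S1; split=> // S' _; move: H1; lia.
case: (classic (exists S', P S' /\ #|S'| <= n)) => [[S' [P' H']]|N].
  exact: IH P' H'.
exists S1; split=> // S' P'.
have: ~ (#|S'| <= n) by move=> H; apply: N; exists S'.
lia.
Qed.

Lemma card3 (T : finType) (a b c : T) : #|[set a; b; c]| <= 3.
Proof.
apply: leq_trans (leq_card_setU _ _).1 _.
by rewrite cards1 cards2; case: (a != b).
Qed.

Lemma card2 (T : finType) (a b : T) : #|[set a; b]| <= 2.
Proof. by rewrite cards2; case: (a != b). Qed.

Lemma Nv_cut (T : finType) (e : rel T) : simple_graph e -> regular e 3 -> 5 <= #|T| ->
  forall v, vertex_cut e [set y | e v y].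
Proof.
move=> [Hs Hi] Hr HT v.
have [y Hy]: exists y, y \notin v :: enum [set y | e v y].
  by apply: ex_out; rewrite /= -cardE Hr.
move: Hy; rewrite inE negb_or mem_enum => /andP [yv yN].
apply: (@cut_of T e Hs _ [set v] v y).
- by rewrite inE.
- by rewrite inE Hi.
- by rewrite inE.
- by [].
- by move=> z w; rewrite !inE => /eqP -> _ ->; rewrite orbT.
Qed.

Lemma memNeq (T : finType) (A : {set T}) x y : x \in A -> y \notin A -> x != y.
Proof. by move=> xA yA; apply/eqP=> E; rewrite -E xA in yA. Qed.

Lemma memNeqr (T : finType) (A : {set T}) x y : x \in A -> y \notin A -> y != x.
Proof. by move=> xA yA; rewrite eq_sym (memNeq xA yA). Qed.

Lemma swap2 (T : finType) (e : rel T) : simple_graph e -> regular e 3 ->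
  forall (u v u1 v1 v2 : T) (C D : {set T}),
  u \notin C -> v \notin C -> u \notin D -> v2 \in D -> (forall z, z \in C -> z \notin D) ->
  u != v ->
  (forall z w, z \in C -> e z w -> w \in C \/ w = u \/ w = v) ->
  e u u1 -> u1 \in C -> e v u -> e v v1 -> v1 \in C -> e v v2 -> ~~ e u v1 ->
  vertex_cut e [set u; v1] /\ independent e [set u; v1].
Proof.
move=> [Hs Hi] Hr u v u1 v1 v2 C D uC vC uD v2D CD uv cl uu1 u1C vu vv1 v1C vv2 nuv1.
have uv1 : u != v1 by rewrite eq_sym (memNeq v1C uC).
have uv2 : u != v2 by rewrite eq_sym (memNeq v2D uD).
have v12 : v1 != v2 by rewrite eq_sym (memNeq v2D (CD _ v1C)).
have nbv := nb3 Hr vu vv1 vv2 uv1 uv2 v12.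
split.
  apply: (@cut_of T e Hs [set u; v1] C u1 v) => //.
  - rewrite !inE negb_or (memNeq u1C uC) /=.
    by apply/eqP=> E; rewrite -E uu1 in nuv1.
  - by rewrite !inE negb_or eq_sym uv /= eq_sym (memNeq v1C vC).
  - move=> z w zC; rewrite !inE negb_or => /andP [zu zv1] zw.
    case: (cl z w zC zw) => [->//|[->|E]]; first by rewrite eqxx orbT.
    subst w; have vz : e v z by rewrite Hs.
    case: (nbv z vz) => [E|[E|E]]; subst z.
    + by rewrite zC in uC.
    + by rewrite eqxx in zv1.
    + by move: (CD _ zC); rewrite v2D.
move=> a b; rewrite !inE => /orP[]/eqP-> /orP[]/eqP->; by rewrite ?Hi // Hs.
Qed.

Lemma has_nb (T : finType) (e : rel T) : symmetric e ->
  forall (X : {set T}) p q x0, x0 \in X -> p \notin X -> q \notin X -> p != q ->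
  (forall z w, z \in X -> e z w -> w \in X \/ w = p \/ w = q) ->
  (forall S', vertex_cut e S' -> 2 <= #|S'|) -> exists p1, e p p1 /\ p1 \in X.
Proof.
move=> Hs X p q x0 x0X pX qX pq cl mn.
case: (classic (exists p1, e p p1 /\ p1 \in X)) => // N; exfalso.
have: vertex_cut e [set q].
  apply: (@cut_of T e Hs [set q] X x0 p) => //.
  - by rewrite inE (memNeq x0X qX).
  - by rewrite inE.
  - move=> z w zX _ zw; case: (cl z w zX zw) => [->//|[E|->]]; last by rewrite inE eqxx orbT.
    by subst w; exfalso; apply: N; exists z; rewrite Hs.
by move/mn; rewrite cards1.
Qed.

Lemma kappa2 (T : finType) (e : rel T) : simple_graph e -> regular e 3 ->
  forall S0 : {set T}, vertex_cut e S0 -> #|S0| = 2 ->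
  (forall S', vertex_cut e S' -> 2 <= #|S'|) ->
  exists S, [/\ vertex_cut e S, independent e S & #|S| <= 2].
Proof.
move=> sg Hr S0 cut0 c2 mn; have [Hs Hi] := sg.
have/cards2P [u [v [uv E]]]: #|S0| == 2 by rewrite c2.
case: (boolP (e u v)) => euv; last first.
  exists S0; split => //; last by rewrite c2.
  move=> a b; rewrite E !inE => /orP[]/eqP-> /orP[]/eqP->; by rewrite ?Hi // Hs.
subst S0; move: cut0 => [x [y [xS yS ncon]]].
set S := [set u; v].
set C := [set z | (z \notin S) && connect (del_rel e S) x z].
set D := [set z | (z \notin S) && ~~ connect (del_rel e S) x z].
have xC : x \in C by rewrite inE xS connect0.
have uC : u \notin C by rewrite !inE eqxx.
have vC : v \notin C by rewrite !inE eqxx orbT.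
have uD : u \notin D by rewrite !inE eqxx.
have vD : v \notin D by rewrite !inE eqxx orbT.
have CD : forall z, z \in C -> z \notin D.
  by move=> z; rewrite !inE => /andP [_ ->]; rewrite andbF.
have clC : forall z w, z \in C -> e z w -> w \in C \/ w = u \/ w = v.
  move=> z w; rewrite inE => /andP [zS cz] zw.
  case: (boolP (w \in S)) => [|wS]; first by rewrite !inE => /orP [] /eqP ->; tauto.
  left; rewrite inE wS /=; apply: connect_trans cz (connect1 _).
  by rewrite /del_rel /= zw zS wS.
have clD : forall z w, z \in D -> e z w -> w \in D \/ w = u \/ w = v.
  move=> z w; rewrite inE => /andP [zS cz] zw.
  case: (boolP (w \in S)) => [|wS]; first by rewrite !inE => /orP [] /eqP ->; tauto.
  left; rewrite inE wS /=; apply/negP=> cw; move/negP: cz; apply.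
  apply: connect_trans cw (connect1 _).
  by rewrite /del_rel /= Hs zw zS wS.
have yD : y \in D by rewrite inE yS ncon.
have vu : v != u by rewrite eq_sym.
have clC' : forall z w, z \in C -> e z w -> w \in C \/ w = v \/ w = u.
  by move=> z w zC zw; move: (clC z w zC zw); tauto.
have clD' : forall z w, z \in D -> e z w -> w \in D \/ w = v \/ w = u.
  by move=> z w zC zw; move: (clD z w zC zw); tauto.
have DC : forall z, z \in D -> z \notin C.
  by move=> z zD; apply/negP=> zC; move: (CD z zC); rewrite zD.
have [u1 [uu1 u1C]] := has_nb Hs xC uC vC uv clC mn.
have [v1 [vv1 v1C]] := has_nb Hs xC vC uC vu clC' mn.
have [u2 [uu2 u2D]] := has_nb Hs yD uD vD uv clD mn.
have [v2 [vv2 v2D]] := has_nb Hs yD vD uD vu clD' mn.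
have evu : e v u by rewrite Hs.
case: (boolP (e u v1)) => h1; last first.
  have [? ?] := swap2 sg Hr uC vC uD v2D CD uv clC uu1 u1C evu vv1 v1C vv2 h1.
  by exists [set u; v1]; split => //; apply: card2.
case: (boolP (e u v2)) => h2; last first.
  have [? ?] := swap2 sg Hr uD vD uC v1C DC uv clD uu2 u2D evu vv2 v2D vv1 h2.
  by exists [set u; v2]; split => //; apply: card2.
case: (boolP (e v u1)) => h3; last first.
  have [? ?] := swap2 sg Hr vC uC vD u2D CD vu clC' vv1 v1C euv uu1 u1C uu2 h3.
  by exists [set v; u1]; split => //; apply: card2.
case: (boolP (e v u2)) => h4; last first.
  have [? ?] := swap2 sg Hr vD uD vC u1C DC vu clD' vv2 v2D euv uu2 u2D uu1 h4.
  by exists [set v; u2]; split => //; apply: card2.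
exfalso.
have nbu := nb3 Hr euv uu1 uu2 (memNeqr u1C vC) (memNeqr u2D vD) (memNeqr u2D (CD _ u1C)).
have nbv := nb3 Hr evu vv1 vv2 (memNeqr v1C uC) (memNeqr v2D uD) (memNeqr v2D (CD _ v1C)).
have E1 : v1 = u1.
  case: (nbu v1 h1) => [E|[E|E]] //; subst.
  - by rewrite v1C in vC.
  - by move: (CD _ v1C); rewrite u2D.
have E2 : v2 = u2.
  case: (nbu v2 h2) => [E|[E|E]] //; subst.
  - by rewrite v2D in vD.
  - by move: (CD _ u1C); rewrite v2D.
subst v1 v2.
have [w /and3P [u1w wu wv]] := nb_third Hr u1 u v.
have wC : w \in C.
  case: (clC u1 w u1C u1w) => [//|[E|E]]; subst.
  - by rewrite eqxx in wu.
  - by rewrite eqxx in wv.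
have: vertex_cut e [set u1].
  apply: (@cut_of T e Hs [set u1] C w u) => //.
  - by rewrite inE; apply/eqP=> E; subst; rewrite Hi in u1w.
  - by rewrite inE eq_sym (memNeq u1C uC).
  - move=> z w' zC; rewrite inE => zu1 zw'.
    case: (clC z w' zC zw') => [->//|[E|E]]; subst w'.
    + have: e u z by rewrite Hs.
      move/nbu => [E|[E|E]]; subst z.
      * by rewrite zC in vC.
      * by rewrite eqxx in zu1.
      * by move: (CD _ zC); rewrite u2D.
    + have: e v z by rewrite Hs.
      move/nbv => [E|[E|E]]; subst z.
      * by rewrite zC in uC.
      * by rewrite eqxx in zu1.
      * by move: (CD _ zC); rewrite u2D.
by move/mn; rewrite cards1.
Qed.

Lemma adj_neq (T : finType) (e : rel T) : irreflexive e -> forall x y, e x y -> x != y.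
Proof. by move=> Hi x y xy; apply/eqP=> E; subst; rewrite Hi in xy. Qed.

Lemma ex_out6 (T : finType) (a b c d f g : T) : 6 < #|T| ->
  exists y, [&& y != a, y != b, y != c, y != d, y != f & y != g].
Proof.
move=> H; have [y Hy] := @ex_out T [:: a; b; c; d; f; g] H.
by exists y; move: Hy; rewrite !inE !negb_or.
Qed.

Lemma diamond (T : finType) (e : rel T) : simple_graph e -> regular e 3 -> 8 <= #|T| ->
  (forall S', vertex_cut e S' -> 3 <= #|S'|) ->
  forall a b c d, e a b -> e b c -> e a c -> e a d -> e b d -> d != c -> False.
Proof.
move=> [Hs Hi] Hr H8 no2 a b c d ab bc ac ad bd dc.
have [c' /and3P [cc' c'a c'b]] := nb_third Hr c a b.
have [x /and3P [dx xa xb]] := nb_third Hr d a b.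
have ba : e b a by rewrite Hs.
have ca : e c a by rewrite Hs.
have cb : e c b by rewrite Hs.
have da : e d a by rewrite Hs.
have db : e d b by rewrite Hs.
have cd : c != d by rewrite eq_sym.
have nba := nb3 Hr ab ac ad (adj_neq Hi bc) (adj_neq Hi bd) cd.
have nbb := nb3 Hr ba bc bd (adj_neq Hi ac) (adj_neq Hi ad) cd.
have ac' : a != c' by rewrite eq_sym.
have bc' : b != c' by rewrite eq_sym.
have ax : a != x by rewrite eq_sym.
have bx : b != x by rewrite eq_sym.
have nbc := nb3 Hr ca cb cc' (adj_neq Hi ab) ac' bc'.
have nbd := nb3 Hr da db dx (adj_neq Hi ab) ax bx.
have [y /and5P [ya yb yc yd /andP [yc' yx]]] := ex_out6 a b c d c' x (leq_trans (isT : 6 < 8) H8).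
have: vertex_cut e [set c'; x].
  apply: (@cut_of T e Hs [set c'; x] [set a; b; c; d] a y).
  - by rewrite !inE eqxx.
  - by rewrite !inE negb_or eq_sym c'a eq_sym xa.
  - by rewrite !inE (negbTE ya) (negbTE yb) (negbTE yc) (negbTE yd).
  - by rewrite !inE (negbTE yc') (negbTE yx).
  - move=> z w; rewrite !inE => /orP [/orP [/orP [] |] |] /eqP -> _ zw.
    + by case: (nba w zw) => [->|[->|->]]; rewrite eqxx ?orbT.
    + by case: (nbb w zw) => [->|[->|->]]; rewrite eqxx ?orbT.
    + by case: (nbc w zw) => [->|[->|->]]; rewrite eqxx ?orbT.
    + by case: (nbd w zw) => [->|[->|->]]; rewrite eqxx ?orbT.
by move/no2 => H; have := leq_trans H (card2 c' x).
Qed.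

Lemma tri_indep (T : finType) (e : rel T) : simple_graph e -> regular e 3 -> 8 <= #|T| ->
  (forall S', vertex_cut e S' -> 3 <= #|S'|) ->
  forall a b c a' b' c', e a b -> e b c -> e a c ->
  e a a' -> a' != b -> a' != c ->
  e b b' -> b' != a -> b' != c ->
  e c c' -> c' != a -> c' != b ->
  a' != b' -> a' != c' ->
  (exists s t, [&& e a' s, e a' t & e s t]) -> ~~ e a' b'.
Proof.
move=> [Hs Hi] Hr H8 no2 a b c a' b' c' ab bc ac aa' a'b a'c bb' b'a b'c cc' c'a c'b
  a'b' a'c' [s [t /and3P [a's a't st]]].
apply/negP => ea'b'.
have [p /and3P [a'p pa pb']] := nb_third Hr a' a b'.
have ba : e b a by rewrite Hs.
have ca : e c a by rewrite Hs.
have cb : e c b by rewrite Hs.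
have a'a : e a' a by rewrite Hs.
have b'b : e b' b by rewrite Hs.
have b'a' : e b' a' by rewrite Hs.
have ba' : b != a' by rewrite eq_sym.
have ca' : c != a' by rewrite eq_sym.
have ab' : a != b' by rewrite eq_sym.
have cb' : c != b' by rewrite eq_sym.
have ac' : a != c' by rewrite eq_sym.
have bc' : b != c' by rewrite eq_sym.
have ap : a != p by rewrite eq_sym.
have b'p : b' != p by rewrite eq_sym.
have nba := nb3 Hr ab ac aa' (adj_neq Hi bc) ba' ca'.
have nbb := nb3 Hr ba bc bb' (adj_neq Hi ac) ab' cb'.
have nbc := nb3 Hr ca cb cc' (adj_neq Hi ab) ac' bc'.
have nba' := nb3 Hr a'a ea'b' a'p ab' ap b'p.
have n1 : ~~ e a b'.
  apply/negP => H; case: (nba b' H) => [E|[E|E]].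
  - by rewrite E Hi in bb'.
  - by rewrite E eqxx in b'c.
  - by rewrite E eqxx in a'b'.
have n0 : ~~ e a' b.
  apply/negP => H; have : e b a' by rewrite Hs.
  case/nbb => [E|[E|E]].
  - by rewrite E Hi in aa'.
  - by rewrite E eqxx in a'c.
  - by rewrite E eqxx in a'b'.
have pb : p != b by apply/eqP=> E; rewrite -E a'p in n0.
have n2 : ~~ e a p.
  apply/negP => H; case: (nba p H) => [E|[E|E]].
  - by rewrite E eqxx in pb.
  - have : e c a' by move: a'p; rewrite E Hs.
    case/nbc => [E'|[E'|E']].
    + by rewrite E' Hi in aa'.
    + by rewrite E' eqxx in a'b.
    + by rewrite E' eqxx in a'c'.
  - by rewrite E Hi in a'p.
have n3 : ~~ e b' p.
  apply/negP => b'p'.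
  have bp : b != p by rewrite eq_sym.
  have nbb' := nb3 Hr b'b b'a' b'p' ba' bp (adj_neq Hi a'p).
  have [y /and5P [ya yb ya' yb' /andP [yc yp]]] :=
    ex_out6 a b a' b' c p (leq_trans (isT : 6 < 8) H8).
  have: vertex_cut e [set c; p].
    apply: (@cut_of T e Hs [set c; p] [set a; b; a'; b'] a y).
    - by rewrite !inE eqxx.
    - by rewrite !inE negb_or (adj_neq Hi ac) ap.
    - by rewrite !inE (negbTE ya) (negbTE yb) (negbTE ya') (negbTE yb').
    - by rewrite !inE (negbTE yc) (negbTE yp).
    - move=> z w; rewrite !inE => /orP [/orP [/orP [] |] |] /eqP -> _ zw.
      + by case: (nba w zw) => [->|[->|->]]; rewrite eqxx ?orbT.
      + by case: (nbb w zw) => [->|[->|->]]; rewrite eqxx ?orbT.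
      + by case: (nba' w zw) => [->|[->|->]]; rewrite eqxx ?orbT.
      + by case: (nbb' w zw) => [->|[->|->]]; rewrite eqxx ?orbT.
  by move/no2 => H; have := leq_trans H (card2 c p).
move: st; case: (nba' s a's) => [->|[->|->]]; case: (nba' t a't) => [->|[->|->]]; by rewrite ?Hi ?(negbTE n1) ?(negbTE n2) ?(negbTE n3) // Hs
    ?(negbTE n1) ?(negbTE n2) ?(negbTE n3).
Qed.

Lemma kappa3 (T : finType) (e : rel T) : simple_graph e -> regular e 3 -> 8 <= #|T| ->
  (forall S', vertex_cut e S' -> 3 <= #|S'|) ->
  exists S, [/\ vertex_cut e S, independent e S & #|S| <= 3].
Proof.
move=> sg Hr H8 no2; have [Hs Hi] := sg.
case: (classic (exists v, forall s t, e v s -> e v t -> ~~ e s t)) => [[v Hv]|N].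
  exists [set y | e v y]; split.
  - by apply: Nv_cut => //; apply: leq_trans H8.
  - by move=> s t; rewrite !inE; apply: Hv.
  - by rewrite Hr.
have tri : forall v, exists s t, [&& e v s, e v t & e s t].
  move=> v; apply: NNPP => H; apply: N; exists v => s t vs vt.
  by apply/negP => st; apply: H; exists s, t; rewrite vs vt st.
have [a _] := @ex_out T [::] (leq_trans (isT : 0 < 8) H8).
have [b [c /and3P [ab ac bc]]] := tri a.
have [a' /and3P [aa' a'b a'c]] := nb_third Hr a b c.
have [b' /and3P [bb' b'a b'c]] := nb_third Hr b a c.
have [c' /and3P [cc' c'a c'b]] := nb_third Hr c a b.
have ba : e b a by rewrite Hs.
have ca : e c a by rewrite Hs.
have cb : e c b by rewrite Hs.
have a'b' : a' != b'.
  by apply/eqP=> E; rewrite -E in bb'; apply: (diamond sg Hr H8 no2 ab bc ac aa' bb' a'c).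
have a'c' : a' != c'.
  by apply/eqP=> E; rewrite -E in cc'; apply: (diamond sg Hr H8 no2 ac cb ab aa' cc' a'b).
have b'c' : b' != c'.
  by apply/eqP=> E; rewrite -E in cc'; apply: (diamond sg Hr H8 no2 bc ca ba bb' cc' b'a).
have i1 := tri_indep sg Hr H8 no2 ab bc ac aa' a'b a'c bb' b'a b'c cc' c'a c'b a'b' a'c' (tri a').
have i2 := tri_indep sg Hr H8 no2 ac cb ab aa' a'c a'b cc' c'a c'b bb' b'a b'c a'c' a'b' (tri a').
have b'a' : b' != a' by rewrite eq_sym.
have i3 := tri_indep sg Hr H8 no2 bc ca ba bb' b'c b'a cc' c'b c'a aa' a'b a'c b'c' b'a' (tri b').
have ba' : b != a' by rewrite eq_sym.
have ca' : c != a' by rewrite eq_sym.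
have ab' : a != b' by rewrite eq_sym.
have cb' : c != b' by rewrite eq_sym.
have ac' : a != c' by rewrite eq_sym.
have bc' : b != c' by rewrite eq_sym.
have nba := nb3 Hr ab ac aa' (adj_neq Hi bc) ba' ca'.
have nbb := nb3 Hr ba bc bb' (adj_neq Hi ac) ab' cb'.
have nbc := nb3 Hr ca cb cc' (adj_neq Hi ab) ac' bc'.
have [y /and5P [ya yb yc ya' /andP [yb' yc']]] :=
  ex_out6 a b c a' b' c' (leq_trans (isT : 6 < 8) H8).
exists [set a'; b'; c']; split; last by apply: card3.
  apply: (@cut_of T e Hs [set a'; b'; c'] [set a; b; c] a y).
  - by rewrite !inE eqxx.
  - by rewrite !inE !negb_or (adj_neq Hi aa') ab' ac'.
  - by rewrite !inE (negbTE ya) (negbTE yb) (negbTE yc).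
  - by rewrite !inE (negbTE ya') (negbTE yb') (negbTE yc').
  - move=> z w; rewrite !inE => /orP [/orP [] |] /eqP -> _ zw.
    + by case: (nba w zw) => [->|[->|->]]; rewrite eqxx ?orbT.
    + by case: (nbb w zw) => [->|[->|->]]; rewrite eqxx ?orbT.
    + by case: (nbc w zw) => [->|[->|->]]; rewrite eqxx ?orbT.
move=> s t; rewrite !inE => /orP [/orP [] |] /eqP -> /orP [/orP [] |] /eqP ->;
  by rewrite ?Hi ?(negbTE i1) ?(negbTE i2) ?(negbTE i3) // Hs
    ?(negbTE i1) ?(negbTE i2) ?(negbTE i3).
Qed.

Unset Implicit Arguments.

Theorem lemma6 (T : finType) (e : rel T) :
  simple_graph e -> connected_graph e -> regular e 3 -> 8 <= #|T| ->
  exists S : {set T}, min_vertex_cut e S /\ independent e S.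
Proof.
move=> sg _ Hr H8; have [Hs Hi] := sg.
have [v0 _] := @ex_out T [::] (leq_trans (isT : 0 < 8) H8).
have H5 : 5 <= #|T| by apply: leq_trans H8.
have [S0 [cut0 mn]] := ex_min (ex_intro (vertex_cut e) _ (Nv_cut sg Hr H5 v0)).
have k3 : #|S0| <= 3 by rewrite -(Hr v0); apply: mn; apply: Nv_cut.
suff [S [cS iS kS]] : exists S, [/\ vertex_cut e S, independent e S & #|S| <= #|S0|].
  exists S; split => //; split => // S' cS'; exact: leq_trans kS (mn S' cS').
case: (leqP #|S0| 1) => k1.
  exists S0; split => // x y xS yS.
  by rewrite (card_le1_eqP k1 x y xS yS) Hi.
case: (leqP #|S0| 2) => k2.
  have c2 : #|S0| = 2 by apply/eqP; rewrite eqn_leq k2 k1.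
  have mn2 : forall S', vertex_cut e S' -> 2 <= #|S'| by move=> S' c; rewrite -c2; exact: mn.
  have [S [? ? ?]] := kappa2 sg Hr cut0 c2 mn2.
  by exists S; split => //; rewrite c2.
have c3 : #|S0| = 3 by apply/eqP; rewrite eqn_leq k3 k2.
have mn3 : forall S', vertex_cut e S' -> 3 <= #|S'| by move=> S' c; rewrite -c3; exact: mn.
have [S [? ? ?]] := kappa3 sg Hr H8 mn3.
by exists S; split => //; rewrite c3.
Qed.
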